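(* Let $V$ be a vector configuration of rank $r$ containing no copy of the zero vector, with dual degree $\deg^*(V)=\delta$ and with $n=r+d+1=2r+2\delta-1$ elements. Then $V$ admits a codegree$^*$ decomposition of length at least $r-1=d+1-2\delta$.
   Context: A vector configuration is a finite family (repetitions allowed) $V$ of vectors in $\mathbb{R}^r$; a subconfiguration is a subfamily, $\operatorname{rank}(V)=\dim\operatorname{lin}(V)$, and cardinalities count multiplicities. For a nonzero linear functional $f$, the oriented linear hyperplane $H=\{f=0\}$ has $H^+=\{f>0\}$, $\overline{H}^-=\{f\le0\}$. Dual codegree: $\operatorname{codeg}^*(W)=\min_H|\overline{H}^-\cap W|$; dual degree: $\deg^*(W)=\max_H|H^+\cap W|-\operatorname{rank}(W)$, over oriented linear hyperplanes $H$. A codegree$^*$ decomposition of $V$ of length $m$ is a partition $V=V_0\uplus V_1\uplus\dots\uplus V_m$ into subconfigurations ($V_0$ possibly empty) with $\operatorname{codeg}^*(V)=\sum_{i=1}^m\operatorname{codeg}^*(V_i)$ and $\operatorname{codeg}^*(V_i)\ge1$ for $i\ge1$. *)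

(* Defs.v *)
From HB Require Import structures.
From mathcomp Require Import all_boot all_order all_algebra.
From mathcomp Require Import boolp reals.

Set Implicit Arguments.
Unset Strict Implicit.
Unset Printing Implicit Defensive.

Import Order.TTheory GRing.Theory Num.Theory.
Local Open Scope ring_scope.

(* A vector configuration of n vectors in R^m is V : 'I_n -> 'rV[R]_m
   (a family, repetitions allowed).  A subconfiguration is given by a set of
   indices S : {set 'I_n}.  A linear functional on R^m is given by a column
   vector c : 'cV[R]_m, f_c(v) = v *m c; the oriented hyperplane H = {f_c = 0}
   is a nonzero functional c != 0. *)

Section VC.
Variables (R : realType) (n m : nat) (V : 'I_n -> 'rV[R]_m).

Definition fval (c : 'cV[R]_m) (v : 'rV[R]_m) : R := (v *m c) ord0 ord0.

Definition vrank (S : {set 'I_n}) : nat := \rank (\sum_(i in S) <<V i>>)%MS.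

Definition cnt_le (S : {set 'I_n}) (c : 'cV[R]_m) : nat :=
  #|[set i in S | fval c (V i) <= 0]|.
Definition cnt_gt (S : {set 'I_n}) (c : 'cV[R]_m) : nat :=
  #|[set i in S | 0 < fval c (V i)]|.

(* codeg*(W) = min over oriented linear hyperplanes of |H^- closed ∩ W|.
   All attained values lie in [0, n], so the min over k < n.+1 is exact
   (the default n is only used if there is no nonzero functional, m = 0). *)
Definition codeg_star (S : {set 'I_n}) : nat :=
  \big[minn/n]_(k < n.+1 | `[< exists c : 'cV[R]_m, c != 0 /\ cnt_le S c = k >])
     (k : nat).

(* deg*(W) = max over oriented linear hyperplanes of |H^+ ∩ W| - rank(W) *)
Definition deg_star (S : {set 'I_n}) : int :=
  (\max_(k < n.+1 | `[< exists c : 'cV[R]_m, c != 0 /\ cnt_gt S c = k >])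
     (k : nat))%:Z - (vrank S)%:Z.

(* codegree* decomposition of V of length k: blk assigns each element either
   to V_0 (None) or to V_(i+1) (Some i), i < k. *)
Definition codeg_decomposition (k : nat) (blk : 'I_n -> option 'I_k) : Prop :=
  codeg_star setT = \sum_(i < k) codeg_star [set x | blk x == Some i]
  /\ forall i : 'I_k, (1 <= codeg_star [set x | blk x == Some i])%N.

End VC.

(* Main.v *)
Require Import Defs.
From HB Require Import structures.
From mathcomp Require Import all_boot all_order all_algebra.
From mathcomp Require Import boolp reals.
From mathcomp Require Import ring lra zify.
Import Order.TTheory GRing.Theory Num.Theory.
Local Open Scope ring_scope.
Set Implicit Arguments.
Unset Strict Implicit.
Unset Printing Implicit Defensive.


Section Basics.
Variables (R : realType) (n m : nat) (V : 'I_n -> 'rV[R]_m).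

Lemma fvalD (c1 c2 : 'cV[R]_m) v : fval (c1 + c2) v = fval c1 v + fval c2 v.
Proof. by rewrite /fval mulmxDr mxE. Qed.

Lemma fvalZ a (c : 'cV[R]_m) v : fval (a *: c) v = a * fval c v.
Proof. by rewrite /fval -scalemxAr mxE. Qed.

Lemma fvalN (c : 'cV[R]_m) v : fval (- c) v = - fval c v.
Proof. by rewrite /fval mulmxN mxE. Qed.

Lemma fval_lin (c : 'cV[R]_m) a b u v :
  fval c (a *: u + b *: v) = a * fval c u + b * fval c v.
Proof. by rewrite /fval mulmxDl -!scalemxAl !mxE. Qed.

Lemma fvalZv (c : 'cV[R]_m) a v : fval c (a *: v) = a * fval c v.
Proof. by rewrite /fval -scalemxAl mxE. Qed.

Lemma fval0 (c : 'cV[R]_m) : fval c 0 = 0.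
Proof. by rewrite /fval mul0mx mxE. Qed.

Lemma fval_self (u : 'rV[R]_m) : u != 0 -> 0 < fval u^T u.
Proof.
move=> u0; rewrite /fval mxE.
have [j uj] : exists j, u 0 j != 0.
  apply/existsP; apply: contraR u0 => /existsPn H; apply/eqP/matrixP => i j.
  by rewrite ord1 mxE; move: (H j); rewrite negbK => /eqP.
rewrite (bigD1 j) //= ltr_pwDl //.
  by rewrite !mxE -expr2 lt_def sqr_ge0 andbT expf_neq0.
by apply: sumr_ge0 => k _; rewrite mxE -expr2 sqr_ge0.
Qed.

Lemma cnt_le_gt S c : (cnt_le V S c + cnt_gt V S c = #|S|)%N.
Proof.
rewrite /cnt_le /cnt_gt -(cardsID [set i in S | fval c (V i) <= 0] S).
congr (_ + _)%N; apply: eq_card => i; rewrite !inE.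
  by case: (i \in S); rewrite ?andbF ?andbT.
by case: (i \in S); rewrite ?andbF ?andbT //= -ltNge.
Qed.

Lemma cnt_le_leq S c : (cnt_le V S c <= #|S|)%N.
Proof. by rewrite -(cnt_le_gt S c) leq_addr. Qed.

Lemma card_leqn (S : {set 'I_n}) : (#|S| <= n)%N.
Proof. by rewrite -[X in (_ <= X)%N]card_ord max_card. Qed.

Lemma codeg_le S c : c != 0 -> (codeg_star V S <= cnt_le V S c)%N.
Proof.
move=> c0; rewrite /codeg_star.
have lt : (cnt_le V S c < n.+1)%N by rewrite ltnS (leq_trans (cnt_le_leq S c)) ?card_leqn.
have gen : forall (r : seq 'I_n.+1) (P : pred 'I_n.+1) (j : 'I_n.+1), j \in r -> P j ->
    (\big[minn/n]_(i <- r | P i) (i : nat) <= j)%N.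
  elim=> [|a r IH] P j //; rewrite inE big_cons => /orP [/eqP <- Pj|jr Pj].
    by rewrite Pj geq_minl.
  by case: (P a); rewrite ?(leq_trans (geq_minr _ _)) // IH.
apply: (gen _ _ (Ordinal lt)); first by rewrite mem_index_enum.
by apply/asboolP; exists c.
Qed.

Lemma codeg_ge S k : (exists c : 'cV[R]_m, c != 0) ->
  (forall c, c != 0 -> (k <= cnt_le V S c)%N) -> (k <= codeg_star V S)%N.
Proof.
move=> [c0 c00] H; rewrite /codeg_star.
apply: (big_ind (fun y => k <= y)%N).
- by apply: (leq_trans (H _ c00)); rewrite (leq_trans (cnt_le_leq S c0)) ?card_leqn.
- by move=> x y kx ky; rewrite leq_min kx.
- by move=> i /asboolP [c [cn <-]]; apply: H.
Qed.

Lemma codeg_att S : (exists c : 'cV[R]_m, c != 0) ->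
  exists c, c != 0 /\ cnt_le V S c = codeg_star V S.
Proof.
move=> ex.
have exk : exists k, (fun k => `[< exists c, c != 0 /\ cnt_le V S c = k >]) k.
  by case: ex => c c0; exists (cnt_le V S c); apply/asboolP; exists c.
case: (ex_minnP exk) => k /asboolP [c [c0 ck]] Hmin.
exists c; split => //; apply/eqP; rewrite eqn_leq codeg_le //= ck.
rewrite andbT; apply: codeg_ge => // c1 c10; apply: Hmin; apply/asboolP; by exists c1.
Qed.

Lemma cnt_leU (A B : {set 'I_n}) c : [disjoint A & B] ->
  cnt_le V (A :|: B) c = (cnt_le V A c + cnt_le V B c)%N.
Proof.
move=> dAB; rewrite /cnt_le -cardsUI.
have -> : [set i in A | fval c (V i) <= 0] :&: [set i in B | fval c (V i) <= 0] = set0.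
  apply/setP => i; rewrite !inE.
  case iA: (i \in A); case iB: (i \in B) => //=; rewrite ?andbF //.
  by have := disjoint_setI0 dAB; move/setP/(_ i); rewrite !inE iA iB.
rewrite cards0 addn0; apply: eq_card => i; rewrite !inE.
by rewrite andb_orl.
Qed.

End Basics.


Section Pert.
Variable R : realType.

Lemma eps_step (a b e : R) : 0 < e ->
  exists e', 0 < e' /\ e' <= e /\ (a != 0 -> e' * e' * (b * b) < a * a).
Proof.
move=> e0; case: (eqVneq a 0) => [->|a0].
  by exists e; split => //; split.
set t := a * a; set s := b * b.
have t0 : 0 < t by rewrite /t lt_def sqr_ge0 andbT mulf_neq0.
have s0 : 0 <= s by rewrite /s -expr2 sqr_ge0.
set q := t / (t + s).
have q0 : 0 < q by rewrite /q divr_gt0 // ltr_wpDr.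
have qts : q * (t + s) = t by rewrite /q mulfVK // gt_eqF // ltr_wpDr.
have qs0 : 0 <= q * s by rewrite mulr_ge0 // ltW.
have qt0 : 0 < q * t by rewrite mulr_gt0.
have q1 : q <= 1.
  rewrite -(ler_pM2r t0) mul1r; nra.
have h1 : q * q * s <= q * s.
  rewrite -mulrA; rewrite -[X in _ <= X]mul1r; apply: ler_wpM2r => //.
have key : q * q * s < t by nra.
exists (Order.min e q); split; first by rewrite lt_min e0 q0.
split; first by rewrite ge_min lexx.
move=> _; apply: le_lt_trans key.
have m0 : 0 < Order.min e q by rewrite lt_min e0 q0.
have mq : Order.min e q <= q by rewrite ge_min lexx orbT.
have h2 : Order.min e q * Order.min e q <= q * q by nra.
nra.
Qed.

Lemma eps_seq (l : seq (R * R)) : exists e, 0 < e /\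
  forall e', 0 < e' -> e' <= e -> forall p, p \in l -> p.1 != 0 -> e' * e' * (p.2 * p.2) < p.1 * p.1.
Proof.
elim: l => [|[a b] l [e [e0 He]]].
  by exists 1; split => // e' _ _ p.
have [e' [e'0 [e'e He']]] := eps_step a b e0.
exists e'; split => // e'' e''0 e''e' p; rewrite inE => /orP [/eqP -> /= a0|pl p0].
  have := He' a0; apply: le_lt_trans.
  have h : e'' * e'' <= e' * e' by nra.
  have : 0 <= b * b by rewrite -expr2 sqr_ge0.
  nra.
by apply: He => //; apply: le_trans e'e.
Qed.

Lemma sign_keep (a b e : R) : e * e * (b * b) < a * a ->
  (0 < a -> 0 < a + e * b) /\ (a < 0 -> a + e * b < 0).
Proof. by move=> h; split => ha; nra. Qed.

End Pert.

Section Pert2.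
Variables (R : realType) (n m : nat) (V : 'I_n -> 'rV[R]_m).

Lemma perturb (c g : 'cV[R]_m) : exists e : R, 0 < e /\ forall i,
  (0 < fval c (V i) -> 0 < fval (c + e *: g) (V i)) /\
  (fval c (V i) < 0 -> fval (c + e *: g) (V i) < 0).
Proof.
have [e [e0 He]] := eps_seq [seq (fval c (V i), fval g (V i)) | i <- enum 'I_n].
exists e; split => // i.
have hi : (fval c (V i), fval g (V i)) \in [seq (fval c (V i), fval g (V i)) | i <- enum 'I_n].
  by apply: map_f; rewrite mem_enum.
rewrite fvalD fvalZ.
case: (eqVneq (fval c (V i)) 0) => [->|ci]; first by split; rewrite ltxx.
by apply: sign_keep; apply: (He e e0 (lexx e) _ hi ci).
Qed.

Lemma generic_h (w : 'I_n -> 'rV[R]_m) :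
  exists h : 'cV[R]_m, forall i, w i != 0 -> fval h (w i) != 0.
Proof.
pose p i : {poly R} := \sum_(j < m) (w i 0 j)%:P * 'X^j.
have pE i (t : R) : (p i).[t] = fval (\col_j (t ^+ j)) (w i).
  rewrite /p horner_sum /fval !mxE; apply: eq_bigr => j _.
  by rewrite hornerCM hornerXn !mxE.
have pnz i : w i != 0 -> p i != 0.
  move=> wi; have [j wj] : exists j, w i 0 j != 0.
    apply/existsP; apply: contraR wi => /existsPn H; apply/eqP/matrixP => a b.
    by rewrite ord1 mxE; move: (H b); rewrite negbK => /eqP.
  apply/eqP => /(congr1 (fun q : {poly R} => q`_j)); rewrite coef_sum coef0.
  rewrite (bigD1 j) //= big1 ?addr0 ?coefCM ?coefXn ?eqxx ?mulr1; first by move/eqP: wj.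
  move=> k kj; rewrite coefCM coefXn; case: eqP => [/val_inj E|]; last by rewrite mulr0.
  by move: kj; rewrite E eqxx.
pose P := \prod_(i | w i != 0) p i.
have P0 : P != 0 by apply/prodf_neq0 => i; apply: pnz.
pose rs := [seq (k%:R : R) | k <- iota 0 (size P)].
have urs : uniq rs.
  by rewrite map_inj_uniq ?iota_uniq // => x y /eqP; rewrite eqr_nat => /eqP.
have : ~~ all (root P) rs.
  apply/negP => H; have := max_poly_roots P0 H urs.
  by rewrite size_map size_iota ltnn.
case/allPn => t _ nroot.
exists (\col_j (t ^+ j)) => i wi; rewrite -pE.
move: nroot; rewrite /root /P horner_prod.
by move/prodf_neq0 => /(_ i wi).
Qed.

End Pert2.


Section LinAlg.
Variables (R : realType) (n m : nat) (V : 'I_n -> 'rV[R]_m).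

Lemma zero_span p (B : 'M[R]_(p, m)) :
  exists c : 'cV[R]_m, forall i, (fval c (V i) == 0) = (V i <= B)%MS.
Proof.
have [h Hh] := generic_h (fun i => V i *m cokermx B).
exists (cokermx B *m h) => i.
have -> : fval (cokermx B *m h) (V i) = fval h (V i *m cokermx B) by rewrite /fval mulmxA.
rewrite submxE; case: (eqVneq (V i *m cokermx B) 0) => [->|nz].
  by rewrite fval0 !eqxx.
by rewrite (negbTE (Hh i nz)); apply/esym/negbTE.
Qed.

Lemma vrank_sub p (B : 'M[R]_(p, m)) (S : {set 'I_n}) :
  (forall i, i \in S -> (V i <= B)%MS) -> (vrank V S <= \rank B)%N.
Proof.
move=> H; rewrite /vrank; apply: mxrankS; apply/sumsmx_subP => i iS.
by rewrite genmxE H.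
Qed.

Lemma vrank_sub1 (S T : {set 'I_n}) (u : 'rV[R]_m) : T \subset S ->
  (forall i, i \in S -> i \notin T -> (V i <= u)%MS) -> (vrank V S <= (vrank V T).+1)%N.
Proof.
move=> TS H; rewrite /vrank.
apply: (leq_trans (mxrankS (_ : _ <= (\sum_(i in T) <<V i>> + u)%MS)%MS)).
  apply/sumsmx_subP => i iS; case iT: (i \in T).
    by apply: (submx_trans _ (addsmxSl _ _)); apply: (sumsmx_sup i) => //; rewrite genmxE.
  by apply: (submx_trans _ (addsmxSr _ _)); rewrite genmxE H ?iT.
apply: (leq_trans (mxrank_adds_leqif _ _)); rewrite -[X in (_ <= X)%N]addn1 leq_add2l.
by apply: rank_leq_row.
Qed.

Lemma sub_row_scal (u w : 'rV[R]_m) : (w <= u)%MS -> exists a, w = a *: u.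
Proof.
move/submxP => [D ->]; exists (D 0 0).
by rewrite {1}(mx11_scalar D) mul_scalar_mx.
Qed.

Lemma sub_row2 (u w x : 'rV[R]_m) : (x <= u + w)%MS -> exists a b, x = a *: u + b *: w.
Proof.
move/sub_addsmxP => [[y z] /= ->]; exists (y 0 0), (z 0 0).
by rewrite {1}(mx11_scalar y) {1}(mx11_scalar z) !mul_scalar_mx.
Qed.

End LinAlg.


Section Bal.
Variables (R : realType) (n m : nat) (V : 'I_n -> 'rV[R]_m).
Hypothesis hc : exists c : 'cV[R]_m, c != 0.

Definition balanced (S : {set 'I_n}) := #|S| = (2 * codeg_star V S).+1.
Definition antip (S : {set 'I_n}) := exists u w, [/\ u \in S, w \in S, u != w &
  exists l : R, 0 < l /\ V w = - (l *: V u)].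

Lemma fval_c0 v : fval (0 : 'cV[R]_m) v = 0.
Proof. by rewrite /fval mulmx0 mxE. Qed.

Lemma codeg_leS S : (codeg_star V S <= #|S|)%N.
Proof. by case: hc => c c0; apply: leq_trans (codeg_le V S c0) (cnt_le_leq _ _ _). Qed.

Lemma cnt_gt_bound S c : (cnt_gt V S c + codeg_star V S <= #|S|)%N.
Proof.
case: (eqVneq c 0) => [->|c0].
  rewrite /cnt_gt (_ : [set i in S | _] = set0) ?cards0 ?add0n ?codeg_leS //.
  by apply/setP => i; rewrite !inE fval_c0 ltxx andbF.
by rewrite -(cnt_le_gt V S c) addnC leq_add2r codeg_le.
Qed.

Lemma cnt_gt_pert S c g e : 0 < e ->
  (forall i, (0 < fval c (V i) -> 0 < fval (c + e *: g) (V i)) /\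
             (fval c (V i) < 0 -> fval (c + e *: g) (V i) < 0)) ->
  cnt_gt V S (c + e *: g) =
  (cnt_gt V S c + #|[set i in S | ((fval c (V i) == 0) && (0 < fval g (V i)))%R]|)%N.
Proof.
move=> e0 H; rewrite /cnt_gt -cardsUI.
have -> : [set i in S | 0 < fval c (V i)] :&:
          [set i in S | (fval c (V i) == 0) && (0 < fval g (V i))] = set0.
  by apply/setP => i; rewrite !inE; case: (fval c (V i) =P 0) => [->|]; rewrite ?ltxx ?andbF.
rewrite cards0 addn0; apply: eq_card => i; rewrite !inE.
case: (i \in S) => //=; have [H1 H2] := H i.
case: (ltgtP (fval c (V i)) 0) => [cn|cp|cz].
- by rewrite ltNge ltW ?H2.
- by rewrite H1.
- by rewrite fvalD fvalZ cz add0r pmulr_rgt0.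
Qed.

Lemma cnt_le_split S c : cnt_le V S c =
  (cnt_gt V S (- c) + #|[set i in S | (fval c (V i) == 0)%R]|)%N.
Proof.
rewrite /cnt_le /cnt_gt -cardsUI.
have -> : [set i in S | 0 < fval (- c) (V i)] :&: [set i in S | fval c (V i) == 0] = set0.
  by apply/setP => i; rewrite !inE fvalN; case: (fval c (V i) =P 0) => [->|]; rewrite ?oppr0 ?ltxx ?andbF.
rewrite cards0 addn0; apply: eq_card => i; rewrite !inE fvalN oppr_gt0.
by case: (i \in S) => //=; rewrite le_eqVlt orbC.
Qed.

Lemma zero_small S c g : balanced S ->
  (forall i, i \in S -> fval c (V i) = 0 -> 0 < fval g (V i)) ->
  (#|[set i in S | (fval c (V i) == 0)%R]| <= 1)%N.
Proof.
move=> bS Hg.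
set Z := [set i in S | fval c (V i) == 0].
have ZE : forall d, d = c \/ d = - c ->
    [set i in S | (fval d (V i) == 0) && (0 < fval g (V i))] = Z.
  move=> d dE; apply/setP => i; rewrite !inE.
  case iS: (i \in S) => //=.
  have -> : (fval d (V i) == 0) = (fval c (V i) == 0).
    by case: dE => ->; rewrite ?fvalN ?oppr_eq0.
  by case: eqP => //= /(Hg i iS) ->.
have [e1 [e10 He1]] := perturb V c g.
have [e2 [e20 He2]] := perturb V (- c) g.
have b1 := cnt_gt_bound S (c + e1 *: g).
have b2 := cnt_gt_bound S (- c + e2 *: g).
rewrite (cnt_gt_pert _ e10 He1) (ZE c (or_introl erefl)) in b1.
rewrite (cnt_gt_pert _ e20 He2) (ZE (- c) (or_intror erefl)) in b2.
have s1 := cnt_le_gt V S c.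
rewrite cnt_le_split -/Z in s1.
move: bS; rewrite /balanced => bS.
lia.
Qed.

Lemma no_pos_parallel S u j l : balanced S -> ~ antip S ->
  (forall i, i \in S -> V i != 0) -> u \in S -> j \in S -> j != u ->
  0 < l -> V j = l *: V u -> False.
Proof.
move=> bS nA nz uS jS ju l0 Vj.
have [c Hc] := zero_span V (V u).
have Hg : forall i, i \in S -> fval c (V i) = 0 -> 0 < fval (V u)^T (V i).
  move=> i iS /eqP; rewrite Hc => /sub_row_scal [a Va].
  have a0 : a != 0 by apply: contra (nz i iS) => /eqP a0; rewrite Va a0 scale0r.
  rewrite Va fvalZv pmulr_rgt0 ?fval_self ?nz //.
  case: (ltgtP a 0) a0 => // an _.
  exfalso; apply: nA; exists u, i; split => //.
    apply/negP => /eqP ui; move: Va; rewrite -ui => Va.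
    have : (1 - a) *: V u = 0 by rewrite scalerBl scale1r -Va subrr.
    move/eqP; rewrite scaler_eq0 (negbTE (nz u uS)) orbF subr_eq0 => /eqP a1.
    by move: an; rewrite -a1 ltr10.
  by exists (- a); split; rewrite ?oppr_gt0 // scaleNr opprK.
have := zero_small bS Hg.
rewrite (cardsD1 u) (cardsD1 j) !inE uS jS ju /=.
have -> : fval c (V u) == 0 by rewrite Hc.
have -> : fval c (V j) == 0 by rewrite Hc Vj scalemx_sub.
by [].
Qed.

Lemma nonpar S i j : balanced S -> ~ antip S ->
  (forall i, i \in S -> V i != 0) -> i \in S -> j \in S -> i != j -> ~~ (V i <= V j)%MS.
Proof.
move=> bS nA nz iS jS ij; apply/negP => /sub_row_scal [a Va].
have a0 : a != 0 by apply: contra (nz i iS) => /eqP a0; rewrite Va a0 scale0r.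
case: (ltgtP a 0) a0 => // ha _.
  apply: nA; exists j, i; split => //; first by rewrite eq_sym.
  by exists (- a); split; rewrite ?oppr_gt0 // scaleNr opprK.
exact: (no_pos_parallel bS nA nz jS iS ij ha Va).
Qed.

Lemma third_point S z w : balanced S -> ~ antip S ->
  (forall i, i \in S -> V i != 0) -> z \in S -> w \in S -> z != w ->
  exists x, [/\ x \in S, x != z, x != w & (V x <= V z + V w)%MS].
Proof.
move=> bS nA nz zS wS zw.
case: (pselect (exists x, [/\ x \in S, x != z, x != w & (V x <= V z + V w)%MS])) => // Hno.
exfalso.
have [c Hc] := zero_span V (V z + V w)%MS.
have [c1 Hc1] := zero_span V (V z).
have [c2 Hc2] := zero_span V (V w).
pose g := fval c1 (V w) *: c1 + fval c2 (V z) *: c2.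
have c2z : fval c2 (V z) != 0 by rewrite Hc2 (nonpar bS nA nz zS wS zw).
have c1w : fval c1 (V w) != 0 by rewrite Hc1 (nonpar bS nA nz wS zS _) // eq_sym.
have Hg : forall i, i \in S -> fval c (V i) = 0 -> 0 < fval g (V i).
  move=> i iS /eqP; rewrite Hc => iB.
  have : i = z \/ i = w.
    case: (eqVneq i z) => [->|iz]; first by left.
    case: (eqVneq i w) => [->|iw]; first by right.
    by exfalso; apply: Hno; exists i.
  case=> ->; rewrite /g fvalD !fvalZ.
    have -> : fval c1 (V z) = 0 by apply/eqP; rewrite Hc1.
    by rewrite mulr0 add0r -expr2 lt_def sqr_ge0 andbT expf_neq0.
  have -> : fval c2 (V w) = 0 by apply/eqP; rewrite Hc2.
  by rewrite mulr0 addr0 -expr2 lt_def sqr_ge0 andbT expf_neq0.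
have := zero_small bS Hg.
rewrite (cardsD1 z) (cardsD1 w) !inE zS wS (eq_sym w) zw /=.
have -> : fval c (V z) == 0 by rewrite Hc addsmxSl.
have -> : fval c (V w) == 0 by rewrite Hc addsmxSr.
by [].
Qed.

Lemma cnt_le1 u c : cnt_le V [set u] c = ((fval c (V u) <= 0)%R : nat).
Proof.
rewrite /cnt_le; case h: (fval c (V u) <= 0).
  have -> : [set i in [set u] | fval c (V i) <= 0] = [set u]; last by rewrite cards1.
  by apply/setP => i; rewrite !inE; case: eqP => // ->.
have -> : [set i in [set u] | fval c (V i) <= 0] = set0; last by rewrite cards0.
by apply/setP => i; rewrite !inE; case: eqP => // ->.
Qed.

Lemma cnt_le2 u w c : u != w -> cnt_le V [set u; w] c =
  (((fval c (V u) <= 0)%R : nat) + ((fval c (V w) <= 0)%R : nat))%N.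
Proof.
move=> uw; rewrite cnt_leU ?cnt_le1 //.
rewrite -setI_eq0; apply/eqP/setP => i; rewrite !inE.
by case: (i =P u) => // ->; rewrite (negbTE uw).
Qed.

Lemma peel S u w l : balanced S -> u \in S -> w \in S -> u != w -> 0 < l ->
  V u != 0 -> V w = - (l *: V u) ->
  [/\ codeg_star V S = (codeg_star V (S :\ u :\ w)).+1,
      balanced (S :\ u :\ w) & codeg_star V [set u; w] = 1%N].
Proof.
move=> bS uS wS uw l0 nzu Vw.
set S' := S :\ u :\ w.
have fw c : fval c (V w) = - (l * fval c (V u)) by rewrite Vw /fval mulNmx -scalemxAl !mxE.
have up : 0 < fval (V u)^T (V u) by apply: fval_self.
have ut0 : (V u)^T != 0.
  by apply: contraTneq up => ->; rewrite fval_c0 ltxx.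
have pair : codeg_star V [set u; w] = 1%N.
  apply/eqP; rewrite eqn_leq; apply/andP; split.
    apply: leq_trans (codeg_le V _ ut0) _; rewrite cnt_le2 // fw.
    by rewrite leNgt up /= oppr_le0 ltW // pmulr_rgt0.
  apply: codeg_ge => // c c0; rewrite cnt_le2 // fw oppr_le0.
  by case: (lerP (fval c (V u)) 0) => //= h; rewrite ltW // pmulr_rgt0.
have SE : S = S' :|: [set u; w].
  apply/setP => i; rewrite !inE; case: (eqVneq i w) => [->|]; rewrite ?wS ?orbT //.
  by case: (eqVneq i u) => [->|]; rewrite ?uS ?orbT //= orbF.
have dis : [disjoint S' & [set u; w]].
  by rewrite -setI_eq0 /S'; apply/eqP/setP => i; rewrite !inE; case: (i =P w); case: (i =P u) => //=; rewrite ?andbF.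
have split c : cnt_le V S c = (cnt_le V S' c + cnt_le V [set u; w] c)%N.
  by rewrite {1}SE cnt_leU.
have ge : (codeg_star V S' < codeg_star V S)%N.
  have [c [c0 ce]] := codeg_att V S hc.
  rewrite -ce split; apply: (@leq_trans (codeg_star V S' + 1)); first by rewrite addn1.
  by rewrite leq_add ?codeg_le // -pair codeg_le.
have le : (codeg_star V S <= (codeg_star V S').+1)%N.
  have : ((codeg_star V S).-1 <= codeg_star V S')%N; last by case: (codeg_star V S) => //=.
  apply: codeg_ge => // c c0.
  suff : (codeg_star V S <= (cnt_le V S' c).+1)%N by case: (codeg_star V S) => //=.
  case: (eqVneq (fval c (V u)) 0) => cu.
    have [e [e0 He]] := perturb V c (V u)^T.
    set c' := c + e *: (V u)^T.
    have c'u : 0 < fval c' (V u) by rewrite /c' fvalD fvalZ cu add0r mulr_gt0.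
    have c'0 : c' != 0 by apply: contraTneq c'u => ->; rewrite fval_c0 ltxx.
    have h1 := codeg_le V S c'0.
    have h2 : (cnt_le V S c' < cnt_le V S c)%N.
      rewrite /cnt_le; apply: proper_card; apply/properP; split.
        apply/subsetP => i; rewrite !inE => /andP [-> /=]; rewrite !leNgt; apply: contra.
        by case: (He i).
      by exists u; rewrite !inE uS /= ?cu ?lexx // leNgt c'u.
    have h3 : cnt_le V S c = (cnt_le V S' c + 2)%N.
      rewrite split cnt_le2 // fw cu mulr0 oppr0 lexx //.
    lia.
  have : cnt_le V [set u; w] c = 1%N.
    rewrite cnt_le2 // fw oppr_le0.
    by case: (ltgtP (fval c (V u)) 0) cu => //= h _; [rewrite leNgt pmulr_rlt0 ?h | rewrite ltW // pmulr_rgt0].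
  move: (codeg_le V S c0); rewrite split => h1 h2; rewrite h2 addn1 in h1; exact: h1.
have ce : codeg_star V S = (codeg_star V S').+1.
  by apply/eqP; rewrite eqn_leq le ge.
split => //.
move: bS; rewrite /balanced ce => bS.
have : #|S| = (#|S'| + 2)%N.
  by rewrite SE cardsU (disjoint_setI0 dis) cards0 subn0 cards2 uw.
lia.
Qed.

End Bal.


Section Dot.
Variables (R : realType) (m : nat).
Implicit Types (u v w : 'rV[R]_m).

Definition dot u v := \sum_j u 0 j * v 0 j.

Lemma dotC u v : dot u v = dot v u.
Proof. by apply: eq_bigr => j _; rewrite mulrC. Qed.

Lemma dotDl u v w : dot (u + v) w = dot u w + dot v w.
Proof. by rewrite /dot -big_split; apply: eq_bigr => j _; rewrite mxE mulrDl. Qed.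

Lemma dotDr u v w : dot w (u + v) = dot w u + dot w v.
Proof. by rewrite !(dotC w) dotDl. Qed.

Lemma dotZl a u v : dot (a *: u) v = a * dot u v.
Proof. by rewrite /dot mulr_sumr; apply: eq_bigr => j _; rewrite mxE mulrA. Qed.

Lemma dotZr a u v : dot v (a *: u) = a * dot v u.
Proof. by rewrite !(dotC v) dotZl. Qed.

Lemma dotNl u v : dot (- u) v = - dot u v.
Proof. by rewrite -scaleN1r dotZl mulN1r. Qed.

Lemma dotNr u v : dot v (- u) = - dot v u.
Proof. by rewrite !(dotC v) dotNl. Qed.

Lemma dotBl u v w : dot (u - v) w = dot u w - dot v w.
Proof. by rewrite dotDl dotNl. Qed.

Lemma dotBr u v w : dot w (u - v) = dot w u - dot w v.
Proof. by rewrite dotDr dotNr. Qed.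

Lemma dot_ge0 u : 0 <= dot u u.
Proof. by apply: sumr_ge0 => j _; rewrite -expr2 sqr_ge0. Qed.

Lemma dot_eq0 u : (dot u u == 0) = (u == 0).
Proof.
apply/idP/idP => [h|/eqP ->]; last by rewrite /dot big1 // => j _; rewrite mxE mul0r.
apply: contraLR h => u0; rewrite gt_eqF //.
have := fval_self u0; rewrite /fval mxE => h; apply: lt_le_trans h _.
by rewrite le_eqVlt; apply/orP; left; apply/eqP; apply: eq_bigr => j _; rewrite mxE.
Qed.

Lemma dot_gt0 u : u != 0 -> 0 < dot u u.
Proof. by move=> u0; rewrite lt_def dot_ge0 andbT dot_eq0. Qed.

Lemma dot_sq u k v : dot (u - k *: v) (u - k *: v) =
  dot u u - 2 * k * dot u v + k * k * dot v v.
Proof.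
rewrite !dotBl !dotBr !dotZl !dotZr (dotC v u); ring.
Qed.

Lemma dot_form (e x : 'rV[R]_m) s1 s2 : dot x e = 0 ->
  dot (s1 *: e - x) (s2 *: e - x) = s1 * s2 * dot e e + dot x x.
Proof.
move=> xe; rewrite !dotBl !dotBr !dotZl !dotZr (dotC e x) xe; ring.
Qed.

End Dot.


Section KAlg.
Variable R : realType.

Lemma kelly_alg (E H s1 s2 : R) : 0 < E -> 0 < H -> 0 <= s1 * s2 ->
  s1 * s1 <= s2 * s2 -> s1 != s2 ->
  0 < (s1 * s1 * E + H) - (s1 * s2 * E + H) ^+ 2 / (s2 * s2 * E + H) /\
  (s1 * s1 * E + H) - (s1 * s2 * E + H) ^+ 2 / (s2 * s2 * E + H) < H.
Proof.
move=> E0 H0 p12 sq ne.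
have K0 : 0 < s2 * s2 * E + H.
  have : 0 <= s2 * s2 by rewrite -expr2 sqr_ge0.
  nra.
set K := s2 * s2 * E + H.
have KE : (s1 * s1 * E + H) - (s1 * s2 * E + H) ^+ 2 / K = H * E * ((s1 - s2) ^+ 2) / K.
  by rewrite /K; field; rewrite gt_eqF.
rewrite KE.
have d0 : 0 < (s1 - s2) ^+ 2 by rewrite lt_def sqr_ge0 andbT expf_neq0 // subr_eq0.
have h1 : s1 * s1 <= s1 * s2.
  have h : (s1 * s1) * (s1 * s1) <= (s1 * s2) * (s1 * s2).
    have -> : s1 * s2 * (s1 * s2) = (s1 * s1) * (s2 * s2) by ring.
    by apply: ler_wpM2l => //; rewrite -expr2 sqr_ge0.
  have a0 : 0 <= s1 * s1 by rewrite -expr2 sqr_ge0.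
  case: (lerP (s1 * s1) (s1 * s2)) => // hlt; exfalso.
  have : (s1 * s2) * (s1 * s2) < (s1 * s1) * (s1 * s1).
    by apply: ltr_pM => //.
  lra.
have h2 : (s1 - s2) ^+ 2 <= s2 * s2 by nra.
split.
  by rewrite divr_gt0 // mulr_gt0 // mulr_gt0.
rewrite ltr_pdivrMr // mulrAC -mulrA ltr_pM2l //.
rewrite /K; nra.
Qed.

Definition pairok (a b : R) := 0 <= a * b /\ a * a <= b * b /\ a != b.

Lemma pick3 (y1 y2 y3 : R) : y1 != y2 -> y1 != y3 -> y2 != y3 ->
  [\/ pairok y1 y2, pairok y2 y1, pairok y1 y3 | [\/ pairok y3 y1, pairok y2 y3 | pairok y3 y2]].
Proof.
move=> d12 d13 d23; set P := pairok.
have tot a b : a != b -> 0 <= a * b -> P a b \/ P b a.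
  move=> ab h; case: (lerP (a * a) (b * b)) => hh.
    by left; split.
  by right; split; [rewrite mulrC | split; [rewrite ltW | rewrite eq_sym]].
case: (lerP 0 (y1 * y2)) => h12.
  by case: (tot _ _ d12 h12) => ?; [apply: Or41 | apply: Or42].
case: (lerP 0 (y1 * y3)) => h13.
  by case: (tot _ _ d13 h13) => ?; [apply: Or43 | apply: Or44; apply: Or31].
have h23 : 0 <= y2 * y3 by nra.
by case: (tot _ _ d23 h23) => ?; apply: Or44; [apply: Or32 | apply: Or33].
Qed.

End KAlg.


Section Kelly.
Variables (R : realType) (n m : nat) (V : 'I_n -> 'rV[R]_m) (S : {set 'I_n}) (h : 'cV[R]_m).
Hypothesis hh : forall i, i \in S -> fval h (V i) != 0.
Hypothesis np : forall i j, i \in S -> j \in S -> i != j -> ~~ (V i <= V j)%MS.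
Hypothesis tp : forall z w, z \in S -> w \in S -> z != w ->
  exists x, [/\ x \in S, x != z, x != w & (V x <= V z + V w)%MS].

Definition Pt i := (fval h (V i))^-1 *: V i.

Lemma VP i : i \in S -> V i = fval h (V i) *: Pt i.
Proof. by move=> iS; rewrite /Pt scalerA mulfV ?scale1r // hh. Qed.

Lemma Pt_sub i : i \in S -> (Pt i <= V i)%MS.
Proof. by move=> iS; rewrite /Pt scalemx_sub. Qed.

Definition Dd p a b :=
  let e := Pt b - Pt a in let A := Pt p - Pt a in
  dot (A - (dot A e / dot e e) *: e) (A - (dot A e / dot e e) *: e).

Definition validt (t : 'I_n * 'I_n * 'I_n) :=
  let: (p, a, b) := t in
  [&& p \in S, a \in S, b \in S, dot (Pt b - Pt a) (Pt b - Pt a) != 0 & Dd p a b != 0].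

Lemma Pt_eq i j : i \in S -> j \in S -> Pt i = Pt j -> (V i <= V j)%MS.
Proof.
move=> iS jS e; rewrite (VP iS) e; apply: scalemx_sub; exact: Pt_sub.
Qed.

Lemma Pt_line i a b r : i \in S -> a \in S -> b \in S ->
  Pt i = Pt a + r *: (Pt b - Pt a) -> (V i <= V a + V b)%MS.
Proof.
move=> iS aS bS e; rewrite (VP iS) e; apply: scalemx_sub.
have ha : (Pt a <= V a + V b)%MS by apply: submx_trans (Pt_sub aS) (addsmxSl _ _).
have hb : (Pt b <= V a + V b)%MS by apply: submx_trans (Pt_sub bS) (addsmxSr _ _).
rewrite scalerBr -scaleNr; apply: addmx_sub => //; apply: addmx_sub; exact: scalemx_sub.
Qed.

Lemma third_param a b c : a \in S -> b \in S -> c \in S ->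
  (V c <= V a + V b)%MS -> exists t, Pt c = Pt a + t *: (Pt b - Pt a).
Proof.
move=> aS bS cS /sub_row2 [al [be Vc]].
have hc0 := hh cS. have Va' := VP aS. have Vb' := VP bS.
have hcE : fval h (V c) = al * fval h (V a) + be * fval h (V b) by rewrite Vc fval_lin.
have -> : Pt c = (fval h (V c))^-1 *: V c by [].
set ha := fval h (V a) in hcE Va'.
set hb := fval h (V b) in hcE Vb'.
set hcv := fval h (V c) in hcE hc0 *.
clearbody ha hb hcv.
exists (be * hb / hcv).
have -> : forall t, Pt a + t *: (Pt b - Pt a) = (1 - t) *: Pt a + t *: Pt b.
  by move=> t; rewrite scalerBr scalerBl scale1r addrA addrAC.
rewrite Vc Va' Vb' scalerDr !scalerA.
congr (_ *: _ + _ *: _).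
  by move: hc0; rewrite hcE => hc0; field; rewrite hc0 hh.
by field; rewrite ?hc0 ?hh.
Qed.

Lemma kelly : (vrank V S <= 2)%N.
Proof.
case: (pselect (exists t, validt t)) => [[tt0 vt0] | nov].
  exfalso.
  case: (arg_minP (fun t : 'I_n * 'I_n * 'I_n => Dd t.1.1 t.1.2 t.2) vt0) => [[[p a] b] vm minm].
  move: vm => /and5P [pS aS bS E0 D0].
  set e := Pt b - Pt a in E0 D0.
  set E := dot e e in E0.
  set A := Pt p - Pt a.
  set tau := dot A e / E.
  set x := A - tau *: e.
  have DH : Dd p a b = dot x x by [].
  rewrite DH in D0.
  set H := dot x x in D0 DH.
  have Epos : 0 < E by rewrite lt_def E0 dot_ge0.
  have Hpos : 0 < H by rewrite lt_def D0 dot_ge0.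
  have xe : dot x e = 0.
    by rewrite /x dotBl dotZl /tau -/E mulfVK ?subrr.
  have ab : a != b.
    by apply: contra E0 => /eqP eab; rewrite /E /e eab subrr /dot big1 // => j _; rewrite mxE mul0r.
  have [c [cS ca cb cV]] := tp aS bS ab.
  have [t PPc] := third_param aS bS cS cV.
  have PPa : Pt a = Pt a + 0 *: e by rewrite scale0r addr0.
  have PPb : Pt b = Pt a + 1 *: e by rewrite scale1r /e addrCA subrr addr0.
  have PPp : Pt p = Pt a + (tau *: e + x) by rewrite /x [tau *: e + _]addrC subrK /A addrCA subrr addr0.
  have step : forall i1 i2 r1 r2, i1 \in S -> i2 \in S ->
      Pt i1 = Pt a + r1 *: e -> Pt i2 = Pt a + r2 *: e -> pairok (r1 - tau) (r2 - tau) -> False.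
    move=> i1 i2 r1 r2 i1S i2S P1 P2 [ok1 [ok2 ok3]].
    set s1 := r1 - tau in ok1 ok2 ok3; set s2 := r2 - tau in ok1 ok2 ok3.
    have A1 : Pt i1 - Pt p = s1 *: e - x.
      by rewrite P1 PPp /s1 scalerBl opprD addrACA subrr add0r opprD addrA.
    have A2 : Pt i2 - Pt p = s2 *: e - x.
      by rewrite P2 PPp /s2 scalerBl opprD addrACA subrr add0r opprD addrA.
    have E' : dot (Pt i2 - Pt p) (Pt i2 - Pt p) = s2 * s2 * E + H by rewrite A2 dot_form.
    have M' : dot (Pt i1 - Pt p) (Pt i2 - Pt p) = s1 * s2 * E + H by rewrite A1 A2 dot_form.
    have N' : dot (Pt i1 - Pt p) (Pt i1 - Pt p) = s1 * s1 * E + H by rewrite A1 dot_form.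
    have [D1 D2] := kelly_alg Epos Hpos ok1 ok2 ok3.
    have K0 : 0 < s2 * s2 * E + H.
      have : 0 <= s2 * s2 by rewrite -expr2 sqr_ge0.
      nra.
    have DE : Dd i1 p i2 = (s1 * s1 * E + H) - (s1 * s2 * E + H) ^+ 2 / (s2 * s2 * E + H).
      by rewrite /Dd dot_sq E' M' N'; field; rewrite (gt_eqF K0).
    have v' : validt (i1, p, i2).
      by rewrite /validt i1S pS i2S E' DE !gt_eqF.
    have := minm _ v'; rewrite /= DH DE.
    by rewrite leNgt D2.
  have tnz0 : t != 0.
    apply/eqP => tnz0; move: PPc; rewrite tnz0 scale0r addr0 => PPc.
    by move: (np cS aS ca); rewrite (Pt_eq cS aS PPc).
  have tnz1 : t != 1.
    apply/eqP => tnz1; move: PPc; rewrite tnz1 scale1r /e addrC subrK => PPc.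
    by move: (np cS bS cb); rewrite (Pt_eq cS bS PPc).
  have d12 : 0 - tau != 1 - tau by rewrite (can_eq (subrK _)) eq_sym oner_eq0.
  have d13 : 0 - tau != t - tau by rewrite (can_eq (subrK _)) eq_sym.
  have d23 : 1 - tau != t - tau by rewrite (can_eq (subrK _)) eq_sym.
  case: (pick3 d12 d13 d23) => [hh3|hh3|hh3|[hh3|hh3|hh3]].
  - exact: (step _ _ _ _ aS bS PPa PPb hh3).
  - exact: (step _ _ _ _ bS aS PPb PPa hh3).
  - exact: (step _ _ _ _ aS cS PPa PPc hh3).
  - exact: (step _ _ _ _ cS aS PPc PPa hh3).
  - exact: (step _ _ _ _ bS cS PPb PPc hh3).
  - exact: (step _ _ _ _ cS bS PPc PPb hh3).
case: (set_0Vmem S) => [-> | [a aS]].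
  by rewrite /vrank big_set0 mxrank0.
case: (pselect (exists b, b \in S /\ Pt b != Pt a)) => [[b [bS ne]] | allsame].
  apply: (leq_trans (vrank_sub (B := (V a + V b)%MS) _)).
    move=> i iS.
    have E0 : dot (Pt b - Pt a) (Pt b - Pt a) != 0 by rewrite dot_eq0 subr_eq0.
    have : Dd i a b == 0.
      apply/negPn/negP => D0; apply: nov; exists (i, a, b).
      by rewrite /validt iS aS bS E0 D0.
    rewrite /Dd dot_eq0 subr_eq0 => /eqP Pi.
    apply: (Pt_line iS aS bS (r := dot (Pt i - Pt a) (Pt b - Pt a) / dot (Pt b - Pt a) (Pt b - Pt a))).
    by rewrite -Pi addrC subrK.
  apply: leq_trans (mxrank_adds_leqif _ _) _.
  by rewrite -[2%N]/(1 + 1)%N leq_add ?rank_leq_row.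
apply: (leq_trans (vrank_sub (B := V a) _)).
  move=> i iS; apply: Pt_eq => //.
  by case: (eqVneq (Pt i) (Pt a)) => // ne; exfalso; apply: allsame; exists i.
by apply: leq_trans (rank_leq_row _) _.
Qed.

End Kelly.


Lemma some_widen k (i j : 'I_k) :
  (Some (widen_ord (leqnSn k) j) == Some (widen_ord (leqnSn k) i)) = (Some j == Some i).
Proof.
apply/eqP/eqP => [E|[->]] //; congr Some; apply: val_inj.
exact: (congr1 (fun o => if o is Some a then val a else 0%N) E).
Qed.

Lemma some_widen_max k (i : 'I_k) : (Some (widen_ord (leqnSn k) i) == Some ord_max) = false.
Proof.
apply/negbTE/eqP => E; move: (congr1 (fun o => if o is Some a then val a else 0%N) E) => /= E'.
by move: (ltn_ord i); rewrite E' ltnn.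
Qed.

Section Main.
Variables (R : realType) (n m : nat) (V : 'I_n -> 'rV[R]_m).
Hypothesis hc : exists c : 'cV[R]_m, c != 0.

Lemma antip_exists S : balanced V S -> (forall i, i \in S -> V i != 0) ->
  (3 <= vrank V S)%N -> antip V S.
Proof.
move=> bS nz r3; case: (pselect (antip V S)) => // nA; exfalso.
have [h Hh] := generic_h V.
have hh : forall i, i \in S -> fval h (V i) != 0 by move=> i iS; apply: Hh; apply: nz.
have := kelly hh (fun i j => nonpar hc (i:=i) (j:=j) bS nA nz) (fun z w => third_point hc (z:=z) (w:=w) bS nA nz).
by rewrite leqNgt r3.
Qed.

Lemma main_ind S : balanced V S -> (forall i, i \in S -> V i != 0) ->
  exists k (blk : 'I_n -> option 'I_k),
  [/\ (forall x i, blk x = Some i -> x \in S),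
      codeg_star V S = \sum_(i < k) codeg_star V [set x | blk x == Some i],
      (forall i, 1 <= codeg_star V [set x | blk x == Some i])%N &
      (vrank V S <= k.+1)%N].
Proof.
move: {2}#|S| (leqnn #|S|) => N; elim: N S => [|N IH] S SN bS nz.
  by move: bS; rewrite /balanced; move: SN; rewrite leqn0 => /eqP ->.
case: (leqP 3 (vrank V S)) => [r3|r2].
  have [u [w [uS wS uw [l [l0 Vw]]]]] := antip_exists bS nz r3.
  have [ce bS' pair] := peel hc bS uS wS uw l0 (nz u uS) Vw.
  set S' := S :\ u :\ w in ce bS' pair.
  have S'S : S' \subset S by apply/subsetP => i; rewrite !inE => /and3P [].
  have nz' : forall i, i \in S' -> V i != 0.
    by move=> i; rewrite !inE => /and3P [_ _ iS]; apply: nz.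
  have S'N : (#|S'| <= N)%N.
    have : #|S| = (#|S'| + 2)%N.
      rewrite /S' (cardsD1 u S) (cardsD1 w (S :\ u)) uS !inE eq_sym uw wS.
      simpl; lia.
    lia.
  have [k [blk [supp sumE ge1 rk]]] := IH S' S'N bS' nz'.
  pose blk2 (x : 'I_n) : option 'I_k.+1 :=
    if x \in [set u; w] then Some ord_max
    else if blk x is Some i then Some (widen_ord (leqnSn k) i) else None.
  have E1 : [set x | blk2 x == Some ord_max] = [set u; w].
    apply/setP => x; rewrite !inE /blk2 !inE.
    case: ((x == u) || (x == w)); first by rewrite eqxx.
    by case: (blk x) => // j; rewrite some_widen_max.
  have E2 : forall i : 'I_k, [set x | blk2 x == Some (widen_ord (leqnSn k) i)] =
                             [set x | blk x == Some i].
    move=> i; apply/setP => x; rewrite !inE /blk2.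
    case: ifP => xuw.
      have : blk x != Some i.
        apply/eqP => /supp; rewrite /S' !inE.
        by move: xuw; rewrite !inE => /orP [/eqP ->|/eqP ->]; rewrite eqxx ?andbF.
      by move/negbTE => ->; rewrite eq_sym some_widen_max.
    by case: (blk x) => [j|] //; rewrite some_widen.
  exists k.+1, blk2; split.
  - move=> x i; rewrite /blk2; case: ifP => [|_].
      by rewrite !inE => /orP [/eqP ->|/eqP ->].
    case E: (blk x) => [j|] // _.
    by apply: (subsetP S'S); apply: (supp x j).
  - rewrite big_ord_recr /= E1.
    rewrite (eq_bigr (fun i => codeg_star V [set x | blk x == Some i])); last by move=> i _; rewrite E2.
    by rewrite -sumE pair ce; apply: esym; apply: addn1.
  - move=> i; case: (eqVneq i ord_max) => [->|ne]; first by rewrite E1 pair.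
    have ik : (i < k)%N.
      by move: (ltn_ord i) ne; rewrite ltnS leq_eqVlt -val_eqE /= => /orP [->|].
    have -> : i = widen_ord (leqnSn k) (Ordinal ik) by apply: val_inj.
    by rewrite E2.
  - apply: leq_trans (vrank_sub1 (u := V u) S'S _) _.
      move=> i iS; rewrite /S' !inE iS andbT negb_and !negbK => /orP [/eqP ->|/eqP ->].
        by rewrite Vw -scaleNr scalemx_sub.
      by rewrite submx_refl.
    by rewrite ltnS.
case: (posnP (codeg_star V S)) => [c0|cpos].
  have /cards1P [a Sa] : #|S| == 1%N by rewrite bS c0.
  exists 0%N, (fun _ => None); split => //.
  - by rewrite big_ord0.
  - by case.
  apply: leq_trans (vrank_sub (B := V a) _) (rank_leq_row _).
  by move=> i; rewrite Sa inE => /eqP ->.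
have SE : forall x, (if x \in S then Some (@ord0 0) else None) == Some ord0 = (x \in S).
  by move=> x; case: (x \in S).
exists 1%N, (fun x => if x \in S then Some ord0 else None); split.
- by move=> x i; case: ifP.
- rewrite big_ord1.
  have -> : [set x | (if x \in S then Some (@ord0 0) else None) == Some (@ord0 0)] = S.
    by apply/setP => x; rewrite inE; case: (x \in S).
  by [].
- move=> i; rewrite (ord1 i).
  have -> : [set x | (if x \in S then Some (@ord0 0) else None) == Some (@ord0 0)] = S.
    by apply/setP => x; rewrite inE; case: (x \in S).
  exact: cpos.
- by [].
Qed.

End Main.

Unset Implicit Arguments.


Lemma degE (R : realType) (n m : nat) (V : 'I_n -> 'rV[R]_m) :
  (exists c : 'cV[R]_m, c != 0) ->
  deg_star V setT = ((n - codeg_star V setT)%N)%:Z - (vrank V setT)%:Z.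
Proof.
move=> hc; rewrite /deg_star; congr (_%:Z - _); apply/eqP; rewrite eqn_leq; apply/andP; split.
  apply/bigmax_leqP => k /asboolP [c [c0 ck]]; rewrite -ck.
  have := cnt_le_gt V setT c; rewrite cardsT card_ord => e.
  have := codeg_le V setT c0; lia.
have [c [c0 ce]] := codeg_att V setT hc.
have lt : (n - codeg_star V setT < n.+1)%N by rewrite ltnS leq_subr.
apply: (leq_trans _ (@leq_bigmax_cond _ _ (fun i : 'I_n.+1 => (i : nat)) (Ordinal lt) _)) => //.
apply/asboolP; exists c; split => //.
have := cnt_le_gt V setT c; rewrite cardsT card_ord ce => e /=; lia.
Qed.

Theorem mainTheorem6 (R : realType) (n m : nat) (V : 'I_n -> 'rV[R]_m)
    (r : nat) (delta : int) :
  vrank V setT = r ->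
  (forall i, V i != 0) ->
  deg_star V setT = delta ->
  (n%:Z = 2 * r%:Z + 2 * delta - 1) ->
  exists (k : nat) (blk : 'I_n -> option 'I_k),
    codeg_decomposition V blk /\ (r%:Z - 1 <= k%:Z).
Proof.
move=> hr hnz hd hn.
have n0 : (0 < n)%N.
  case: (posnP n) hn => // -> hn; lia.
have hc : exists c : 'cV[R]_m, c != 0.
  exists (V (Ordinal n0))^T; have := fval_self (hnz (Ordinal n0)).
  by apply: contraTneq => ->; rewrite fval_c0 ltxx.
have cl := codeg_leS V hc setT; rewrite cardsT card_ord in cl.
have bal : balanced V setT.
  rewrite /balanced cardsT card_ord.
  move: hd; rewrite degE // hr => hd.
  lia.
have [k [blk [supp sumE ge1 rk]]] := main_ind hc bal (fun i _ => hnz i).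
exists k, blk; split; first by split.
rewrite hr in rk; lia.
Qed.
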